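(* Let $n=p+q$, let $h^1,\dots,h^n:\mathbb{R}^{p,q}\to\mathcal{C}\ell_{\circledS}(p,q)$ be a smooth Clifford field vector, $h_\rho=\eta_{\rho\mu}h^\mu$, and let $C_1,\dots,C_n:\mathbb{R}^{p,q}\to\mathcal{C}\ell_{\circledS}(p,q)$ be smooth functions satisfying $$\partial_\mu h_\rho-[C_\mu,h_\rho]=0\quad\text{for all }\mu,\rho=1,\dots,n.$$ Let $S:\mathbb{R}^{p,q}\to\mathcal{C}\ell(p,q)$ be a smooth function with values in invertible elements such that $S^{-1}\partial_\mu S\in\mathcal{C}\ell_{\circledS}(p,q)$ for all $\mu$ and all $x$. Put $\acute h_\rho=S^{-1}h_\rho S$ and $\acute C_\mu=S^{-1}C_\mu S-S^{-1}\partial_\mu S$. Then $\acute h_\rho,\acute C_\mu$ take values in $\mathcal{C}\ell_{\circledS}(p,q)$ and $$\partial_\mu \acute h_\rho-[\acute C_\mu,\acute h_\rho]=0\quad\text{for all }\mu,\rho=1,\dots,n.$$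
   Context: $\mathbb{R}^{p,q}$ is $\mathbb{R}^n$ with Cartesian coordinates $x^1,\dots,x^n$, $\partial_\mu=\partial/\partial x^\mu$, and metric $\eta=(\eta_{\mu\nu})=(\eta^{\mu\nu})=\mathrm{diag}(1,\dots,1,-1,\dots,-1)$ ($p$ ones, $q$ minus ones); Einstein summation is used. $\mathcal{C}\ell(p,q)$ is the complex Clifford algebra with identity $e$ and generators $e^1,\dots,e^n$, $e^ae^b+e^be^a=2\eta^{ab}e$, with basis $e$, $e^{a_1\dots a_k}=e^{a_1}\cdots e^{a_k}$ ($a_1<\dots<a_k$); functions into it are differentiated coefficientwise in this fixed basis. $[U,V]=UV-VU$. $\pi_k$ is the projection onto the span of the basis elements with $k$ indices, $\mathrm{Tr}(U)$ the coefficient of $e$. The center is $\mathcal{C}\ell_0$ for even $n$ and $\mathcal{C}\ell_0\oplus\mathcal{C}\ell_n$ for odd $n$; $\mathcal{C}\ell_{\circledS}(p,q)$ is the set of elements with zero projection onto the center. A Clifford field vector is a collection $h^\mu:\mathbb{R}^{p,q}\to\mathcal{C}\ell(p,q)$, $\mu=1,\dots,n$, with $h^\mu h^\nu+h^\nu h^\mu=2\eta^{\mu\nu}e$ and $\mathrm{Tr}(h^1\cdots h^n)=0$ at every point. *)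

(* Defs.v *)
From mathcomp Require Import all_boot all_order all_algebra.
From mathcomp Require Import all_classical all_reals all_analysis.
From mathcomp.real_closed Require Import complex.
Set Implicit Arguments. Unset Strict Implicit. Unset Printing Implicit Defensive.
Import Order.TTheory GRing.Theory Num.Theory.
Import numFieldNormedType.Exports.
Local Open Scope ring_scope.

Section Clifford.
Variables (R : realType) (p q : nat).

(* n = p + q; indices a : 'I_n correspond to 1..n of the paper (shifted). *)
Definition cldim := (p + q)%N.

Definition etad (a : 'I_cldim) : R := if (a < p)%N then 1 else -1.

Definition cleta (a b : 'I_cldim) : R := if a == b then etad a else 0.

(* Elements of Cl(p,q): complex coefficients on the basis e_A, A ⊆ {1..n},
   where e_A = e^{a_1} ... e^{a_k} with a_1 < ... < a_k (e_set0 = e). *)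
Definition Cl := {ffun {set 'I_cldim} -> R[i]}.

(* sign of the product e_A e_B = clsign A B * e_{A Δ B}:
   (-1)^{#{(a,b) in A x B | b < a}} times prod_{a in A ∩ B} cleta^{aa}. *)
Definition clsign (A B : {set 'I_cldim}) : R :=
  (-1) ^+ #|[pred ab : 'I_cldim * 'I_cldim | (ab.1 \in A) && (ab.2 \in B) && (ab.2 < ab.1)%N]|
  * \prod_(a in A :&: B) etad a.

Definition symdiff (A B : {set 'I_cldim}) : {set 'I_cldim} := (A :\: B) :|: (B :\: A).

Definition clmul (U V : Cl) : Cl :=
  [ffun C => \sum_(A : {set 'I_cldim}) \sum_(B : {set 'I_cldim} | symdiff A B == C)
               (clsign A B)%:C%C * U A * V B].

Definition clone : Cl := [ffun A => if A == finset.set0 then 1 else 0].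

Definition clscale (r : R) (U : Cl) : Cl := [ffun A => (r%:C)%C * U A].

Definition clcomm (U V : Cl) : Cl := clmul U V - clmul V U.

Definition clTr (U : Cl) : R[i] := U finset.set0.

(* Cl_S(p,q): zero projection onto the center, i.e. pi_0 U = 0, and
   pi_n U = 0 when n is odd (e_{1..n} is the only basis element with n indices). *)
Definition in_ClS (U : Cl) : Prop :=
  U finset.set0 = 0 /\ (odd cldim -> U finset.setT = 0).

Definition coordvec (mu : 'I_cldim) : 'rV[R]_cldim := delta_mx 0 mu.

Definition rpartial (mu : 'I_cldim) (g : 'rV[R]_cldim -> R) : 'rV[R]_cldim -> R :=
  fun x => 'D_(coordvec mu) g x.

Fixpoint iter_partial (s : seq 'I_cldim) (g : 'rV[R]_cldim -> R) : 'rV[R]_cldim -> R :=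
  if s is mu :: s' then rpartial mu (iter_partial s' g) else g.

Definition rsmooth (g : 'rV[R]_cldim -> R) : Prop :=
  forall s : seq 'I_cldim,
    (forall (x : 'rV[R]_cldim) (mu : 'I_cldim), derivable (iter_partial s g) x (coordvec mu))
    /\ continuous (iter_partial s g : 'rV[R]_cldim -> R).

Definition clsmooth (f : 'rV[R]_cldim -> Cl) : Prop :=
  forall A : {set 'I_cldim},
    rsmooth (fun x => complex.Re (f x A)) /\ rsmooth (fun x => complex.Im (f x A)).

Definition clpartial (mu : 'I_cldim) (f : 'rV[R]_cldim -> Cl) : 'rV[R]_cldim -> Cl :=
  fun x => [ffun A => ((rpartial mu (fun y => complex.Re (f y A)) x)
                        +i* (rpartial mu (fun y => complex.Im (f y A)) x))%C].

Definition clprod_all (h : 'I_cldim -> Cl) : Cl :=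
  foldr (fun a acc => clmul (h a) acc) clone (enum 'I_cldim).

Definition clifford_field_vector (h : 'I_cldim -> 'rV[R]_cldim -> Cl) : Prop :=
  forall x : 'rV[R]_cldim,
    (forall mu nu : 'I_cldim,
        clmul (h mu x) (h nu x) + clmul (h nu x) (h mu x) = clscale (2 * cleta mu nu) clone)
    /\ clTr (clprod_all (fun mu => h mu x)) = 0.

Definition cllower (h : 'I_cldim -> 'rV[R]_cldim -> Cl) (rho : 'I_cldim) : 'rV[R]_cldim -> Cl :=
  fun x => \sum_(mu : 'I_cldim) clscale (cleta rho mu) (h mu x).

End Clifford.

(* Main.v *)
Require Import Defs.
From HB Require Import structures.
From mathcomp Require Import all_boot all_order all_algebra.
From mathcomp Require Import all_classical all_reals all_analysis.
From mathcomp.real_closed Require Import complex.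
From mathcomp Require Import ring lra.
Set Implicit Arguments. Unset Strict Implicit. Unset Printing Implicit Defensive.
Import Order.TTheory GRing.Theory Num.Theory.
Local Open Scope ring_scope.

Section Alg.
Variables (R : realType) (p q : nat).
Local Notation n := (cldim p q).
Local Notation T := {set 'I_n}.
Local Notation Cl := (Cl R p q).

Lemma in_symdiff (A B : T) x : (x \in symdiff A B) = (x \in A) (+) (x \in B).
Proof. by rewrite /symdiff !inE; case: (x \in A); case: (x \in B). Qed.

Lemma symdiffK (A B : T) : symdiff A (symdiff A B) = B.
Proof. by apply/setP=> x; rewrite !in_symdiff; case: (x \in A); case: (x \in B). Qed.

Lemma symdiff_eq (A B C : T) : (symdiff A B == C) = (B == symdiff A C).
Proof.
apply/eqP/eqP => [<-|->]; first by rewrite symdiffK. by rewrite symdiffK.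
Qed.

Lemma clmulE' (U V : Cl) C :
  clmul U V C = \sum_(A : T) ((clsign R A (symdiff A C))%:C)%C * U A * V (symdiff A C).
Proof.
rewrite ffunE; apply: eq_bigr => A _.
rewrite (eq_bigl (pred1 (symdiff A C))); first by rewrite big_pred1_eq.
by move=> B; rewrite /= symdiff_eq.
Qed.

Definition sgb (b : bool) : R := if b then -1 else 1.

Lemma clsignE (A B : T) : clsign R A B =
  (\prod_(a : 'I_n) \prod_(b : 'I_n) sgb [&& a \in A, b \in B & (b < a)%N]) *
  \prod_(a : 'I_n) (if (a \in A) && (a \in B) then etad R a else 1).
Proof.
rewrite /clsign; congr (_ * _); last first.
  by rewrite big_mkcond; apply: eq_bigr => a _; rewrite inE.
rewrite pair_big /= -prodr_const big_mkcond /=.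
by apply: eq_bigr => -[a b] _; rewrite /sgb inE /= andbA.
Qed.

Lemma etad2 (a : 'I_n) : etad R a * etad R a = 1.
Proof. by rewrite /etad; case: ifP => _; rewrite ?mulr1 ?mulrNN ?mulr1. Qed.

Lemma clsign_cocycle (A B C : T) :
  clsign R A B * clsign R (symdiff A B) C = clsign R B C * clsign R A (symdiff B C).
Proof.
rewrite !clsignE.
rewrite mulrACA [X in _ = X]mulrACA; congr (_ * _).
  rewrite -!big_split /=; apply: eq_bigr => a _; rewrite -!big_split /=.
  apply: eq_bigr => b _; rewrite !in_symdiff.
  move: (a \in A) (a \in B) (a \in C) (b \in B) (b \in C) (b < a)%N.
  by do 6!case; rewrite /sgb /= ?mulr1 ?mul1r ?mulrNN ?mulr1.
rewrite -!big_split /=; apply: eq_bigr => a _; rewrite !in_symdiff.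
have := etad2 a.
move: (a \in A) (a \in B) (a \in C) (etad R a) => + + + e.
by do 3!case; rewrite /= ?mulr1 ?mul1r => // ->.
Qed.

Lemma symdiffA (A B C : T) : symdiff A (symdiff B C) = symdiff (symdiff A B) C.
Proof. by apply/setP=> x; rewrite !in_symdiff addbA. Qed.
Lemma symdiffC (A B : T) : symdiff A B = symdiff B A.
Proof. by apply/setP=> x; rewrite !in_symdiff addbC. Qed.
Lemma symdiff0 (A : T) : symdiff finset.set0 A = A.
Proof. by apply/setP=> x; rewrite !in_symdiff inE. Qed.
Lemma symdiffvv (A : T) : symdiff A A = finset.set0.
Proof. by apply/setP=> x; rewrite !in_symdiff inE addbb. Qed.
Lemma symdiff_eq0 (A B : T) : (symdiff A B == finset.set0) = (A == B).
Proof.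
apply/eqP/eqP => [h|->]; last exact: symdiffvv.
by rewrite -(symdiffK A B) h symdiffC symdiff0.
Qed.

Lemma ring1 (K : comNzRingType) (a b u v w : K) : a * (b*u*v)*w = (b*a)*(u*v*w).
Proof. ring. Qed.
Lemma ring2 (K : comNzRingType) (c d u v w : K) : (d*c)*(u*v*w) = c*u*(d*v*w).
Proof. ring. Qed.
Lemma ring3 (K : comNzRingType) (a u v w : K) : a * (u + v) * w = a * u * w + a * v * w.
Proof. ring. Qed.
Lemma ring4 (K : comNzRingType) (a u v w : K) : a * u * (v + w) = a * u * v + a * u * w.
Proof. ring. Qed.

Lemma clmulA : associative (@clmul R p q).
Proof.
move=> U V W; apply/ffunP => E; symmetry; rewrite !clmulE'.
under eq_bigr => D _ do rewrite clmulE' mulr_sumr mulr_suml.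
rewrite exchange_big /=; apply: eq_bigr => A _.
rewrite (reindex_inj (can_inj (symdiffK A))) /= clmulE' mulr_sumr.
apply: eq_bigr => B _; rewrite symdiffK.
set C := symdiff (symdiff A B) E.
have h1 : symdiff B (symdiff A E) = C.
  by apply/setP=> x; rewrite /C !in_symdiff; case: (x \in A); case: (x \in B); case: (x \in E).
have h2 : symdiff A E = symdiff B C.
  by apply/setP=> x; rewrite /C !in_symdiff; case: (x \in A); case: (x \in B); case: (x \in E).
rewrite h1 h2; have hc := clsign_cocycle A B C.
transitivity ((clsign R A B * clsign R (symdiff A B) C)%:C%C
   * (U A * V B * W C)).
  by rewrite [X in _ = X * _]rmorphM /= ring1.
by rewrite hc [X in X * _ = _]rmorphM /= ring2.
Qed.

Lemma clsign0l (A : T) : clsign R finset.set0 A = 1.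
Proof.
rewrite clsignE !big1 ?mulr1 // => a _; rewrite ?inE //.
by rewrite big1 // => b _; rewrite inE.
Qed.
Lemma clsign0r (A : T) : clsign R A finset.set0 = 1.
Proof.
rewrite clsignE !big1 ?mulr1 // => a _; rewrite ?inE ?andbF //.
by rewrite big1 // => b _; rewrite inE andbF.
Qed.

Lemma clone_mul (U : Cl) : clmul (clone R p q) U = U.
Proof.
apply/ffunP => C; rewrite clmulE' (bigD1 finset.set0) //= big1 ?addr0.
  by rewrite ffunE eqxx symdiff0 clsign0l mulr1 mul1r.
by move=> A /negPf hA; rewrite ffunE hA mulr0 mul0r.
Qed.

Lemma clmul_one (U : Cl) : clmul U (clone R p q) = U.
Proof.
apply/ffunP => C; rewrite clmulE' (bigD1 C) //= big1 ?addr0.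
  by rewrite ffunE symdiffvv eqxx clsign0r mulr1 mul1r.
by move=> A hA; rewrite ffunE symdiff_eq0 (negPf hA) mulr0.
Qed.

Lemma clmulDl : left_distributive (@clmul R p q) +%R.
Proof.
move=> U V W; apply/ffunP => C; rewrite clmulE' ffunE !clmulE' -big_split.
by apply: eq_bigr => A _; rewrite ffunE ring3.
Qed.
Lemma clmulDr : right_distributive (@clmul R p q) +%R.
Proof.
move=> U V W; apply/ffunP => C; rewrite clmulE' ffunE !clmulE' -big_split.
by apply: eq_bigr => A _; rewrite ffunE ring4.
Qed.

HB.instance Definition _ := GRing.Zmodule.on Cl.
HB.instance Definition _ := GRing.Zmodule_isPzRing.Build Cl clmulA clone_mul clmul_one clmulDl clmulDr.

Lemma clmulM (U V : Cl) : clmul U V = U * V. Proof. by []. Qed.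
Lemma clone1 : clone R p q = 1 :> Cl. Proof. by []. Qed.


Lemma coef0_comm (U V : Cl) : (U * V) finset.set0 = (V * U) finset.set0.
Proof.
rewrite -!clmulM !clmulE'; apply: eq_bigr => A _.
rewrite symdiffC symdiff0; by rewrite -!mulrA [U A * _]mulrC.
Qed.

Definition cnt (X Y : T) : nat :=
  \sum_(a : 'I_n) \sum_(b : 'I_n) [&& a \in X, b \in Y & (b < a)%N].

Lemma clsign_cnt (X Y : T) : X :&: Y = finset.set0 -> clsign R X Y = (-1) ^+ cnt X Y.
Proof.
move=> h; rewrite /clsign h big_set0 mulr1; congr (_ ^+ _).
rewrite /cnt pair_big /= -sum1_card big_mkcond /=.
by apply: eq_bigr => -[a b] _; rewrite inE /= andbA; case: ifP.
Qed.

Lemma cnt_compl (A : T) : (cnt A (~: A) + cnt (~: A) A = #|A| * #|~: A|)%N.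
Proof.
rewrite /cnt [X in (_ + X)%N]exchange_big -big_split /=.
under eq_bigr => i _ do rewrite -big_split /=.
rewrite -(cardsX A (~: A)) -sum1_card big_mkcond /= pair_big /=.
rewrite [in RHS]big_mkcond /=. apply: eq_bigr => -[a b] _ /=; rewrite !inE /=.
case: (boolP (a \in A)) => ha; case: (boolP (b \in A)) => hb //=.
have neq : a != b by apply/eqP => e; move: hb; rewrite -e ha.
by case: ltngtP neq => // [] /val_inj ->; rewrite eqxx.
Qed.
Lemma coefT_comm (U V : Cl) : odd n -> (U * V) finset.setT = (V * U) finset.setT.
Proof.
move=> hn; rewrite -!clmulM !clmulE'.
have hc : forall A : T, symdiff A finset.setT = ~: A.
  by move=> A; apply/setP=> x; rewrite in_symdiff !inE; case: (x \in A).
under eq_bigr => A _ do rewrite hc.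
under [in RHS]eq_bigr => A _ do rewrite hc.
rewrite [in RHS](reindex_inj (can_inj (@finset.setCK _))) /=.
apply: eq_bigr => A _; rewrite finset.setCK.
rewrite !clsign_cnt ?finset.setICr //; last by rewrite finset.setIC finset.setICr.
have : odd (cnt A (~: A)) = odd (cnt (~: A) A).
  have e1 := congr1 odd (cnt_compl A); rewrite oddD oddM in e1.
  have e2 := congr1 odd (cardsC A); rewrite oddD card_ord hn in e2.
  by move: e1 e2; case: (odd (cnt A _)); case: (odd (cnt _ A));
     case: (odd #|A|); case: (odd #|~: A|).
rewrite -signr_odd => ->; rewrite signr_odd.
by rewrite -!mulrA [V _ * _]mulrC.
Qed.

Lemma conj_coef0 (S Si U : Cl) : S * Si = 1 ->
  (Si * (U * S)) finset.set0 = U finset.set0.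
Proof. by move=> h; rewrite coef0_comm -mulrA h mulr1. Qed.
Lemma conj_coefT (S Si U : Cl) : odd n -> S * Si = 1 ->
  (Si * (U * S)) finset.setT = U finset.setT.
Proof. by move=> hn h; rewrite coefT_comm // -mulrA h mulr1. Qed.

Lemma in_ClS_conj (S Si U : Cl) : S * Si = 1 -> in_ClS U -> in_ClS (Si * (U * S)).
Proof.
move=> h [h0 hT]; split; first by rewrite conj_coef0.
by move=> hn; rewrite conj_coefT // hT.
Qed.

Lemma in_ClSB (U V : Cl) : in_ClS U -> in_ClS V -> in_ClS (U - V).
Proof.
move=> [h0 hT] [k0 kT]; split; first by rewrite !ffunE h0 k0 subrr.
by move=> hn; rewrite !ffunE hT // kT // subrr.
Qed.

Definition cscale (r : R) (U : Cl) : Cl := clscale r U.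
Lemma in_ClS_scale r (U : Cl) : in_ClS U -> in_ClS (clscale r U).
Proof.
move=> [h0 hT]; split; first by rewrite ffunE h0 mulr0.
by move=> hn; rewrite ffunE hT // mulr0.
Qed.

Lemma clscale_mull r (U V : Cl) : clscale r U * V = clscale r (U * V).
Proof.
apply/ffunP => C; rewrite -!clmulM clmulE' ffunE clmulE' mulr_sumr.
by apply: eq_bigr => A _; rewrite ffunE mulrCA !mulrA.
Qed.
Lemma clscale_mulr r (U V : Cl) : U * clscale r V = clscale r (U * V).
Proof.
apply/ffunP => C; rewrite -!clmulM clmulE' ffunE clmulE' mulr_sumr.
by apply: eq_bigr => A _; rewrite ffunE mulrCA [r%:C%C * (_ * _)]mulrCA mulrA.
Qed.
Lemma clscaleD r (U V : Cl) : clscale r (U + V) = clscale r U + clscale r V.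
Proof. by apply/ffunP => C; rewrite !ffunE mulrDr. Qed.
Lemma clscaleB r (U V : Cl) : clscale r (U - V) = clscale r U - clscale r V.
Proof. by apply/ffunP => C; rewrite !ffunE mulrBr. Qed.
Lemma clscale0 (U : Cl) : clscale 0 U = 0.
Proof. by apply/ffunP => C; rewrite !ffunE mul0r. Qed.
Lemma clscale1 (U : Cl) : clscale 1 U = U.
Proof. by apply/ffunP => C; rewrite !ffunE mul1r. Qed.
Lemma clscaleM r s (U : Cl) : clscale r (clscale s U) = clscale (r * s) U.
Proof. by apply/ffunP => C; rewrite !ffunE rmorphM mulrA. Qed.

End Alg.

Import numFieldNormedType.Exports.

Section T.
Local Open Scope classical_set_scope.
Variable R : realType.

Lemma tcvg0 : (fun t : R => t) @ (0:R)^' --> (0:R).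
Proof. exact: cvg_within. Qed.

Lemma tcvg0n : (fun t : R => `|t|) @ (0:R)^' --> (0:R).
Proof. have := @cvg_norm _ _ _ _ _ _ _ tcvg0. by rewrite normr0; apply. Qed.

Lemma sum_cvg0 (I : Type) (r : seq I) (g : I -> R -> R) :
  (forall i, g i t @[t --> (0:R)^'] --> (0:R)) ->
  (\sum_(i <- r) g i t) @[t --> (0:R)^'] --> (0:R).
Proof.
move=> h; elim: r => [|i r IH].
  under eq_fun do rewrite big_nil. exact: cvg_cst.
under eq_fun do rewrite big_cons.
have := cvgD (h i) IH; rewrite addr0; apply.
Qed.

Lemma squeeze0 (f g : R -> R) :
  (\forall t \near (0:R)^', 0 <= f t <= g t) ->
  g t @[t --> (0:R)^'] --> (0:R) -> f t @[t --> (0:R)^'] --> (0:R).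
Proof.
move=> h hg; apply: (@squeeze_cvgr _ _ _ _ (cst 0) g) => //; exact: cvg_cst.
Qed.

Lemma diff_cvg0 (f : R -> R) l :
  (`|f t - l|) @[t --> (0:R)^'] --> (0:R) -> f t @[t --> (0:R)^'] --> l.
Proof.
move=> h; apply/subr_cvg0; apply/norm_cvg0P; exact: h.
Qed.
End T.

Section Norm.
Variables (R : realType) (p q : nat).
Local Notation n := (cldim p q).
Local Notation T := {set 'I_n}.
Local Notation Cl := (Cl R p q).

Definition Nc (z : R[i]) : R := `|complex.Re z| + `|complex.Im z|.
Definition clN (U : Cl) : R := \sum_(A : T) Nc (U A).

Lemma Nc_ge0 z : 0 <= Nc z.
Proof. by rewrite /Nc addr_ge0. Qed.

Lemma NcD a b : Nc (a + b) <= Nc a + Nc b.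
Proof.
case: a => a1 a2; case: b => b1 b2; rewrite /Nc /=.
rewrite addrACA; apply: lerD; exact: ler_normD.
Qed.

Lemma NcN a : Nc (- a) = Nc a.
Proof. by case: a => a1 a2; rewrite /Nc /= !normrN. Qed.

Lemma NcM a b : Nc (a * b) <= Nc a * Nc b.
Proof.
case: a => a1 a2; case: b => b1 b2; rewrite /Nc /=.
rewrite mulrDl !mulrDr -!normrM.
apply: (le_trans (lerD (ler_normB _ _) (ler_normD _ _))).
lra.
Qed.

Lemma Nc_real (r : R) z : Nc ((r%:C)%C * z) = `|r| * Nc z.
Proof.
case: z => a b; rewrite /Nc /= !mul0r subr0 addr0 mulrDr !normrM.
by [].
Qed.

Lemma Nc0 : Nc 0 = 0.
Proof. by rewrite /Nc /= normr0 addr0. Qed.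

Lemma Nc_Re z : `|complex.Re z| <= Nc z.
Proof. by rewrite /Nc lerDl. Qed.
Lemma Nc_Im z : `|complex.Im z| <= Nc z.
Proof. by rewrite /Nc lerDr. Qed.

Lemma Nc_sum (I : Type) (r : seq I) (f : I -> R[i]) :
  Nc (\sum_(i <- r) f i) <= \sum_(i <- r) Nc (f i).
Proof.
elim: r => [|i r IH]; first by rewrite !big_nil Nc0.
rewrite !big_cons; apply: (le_trans (NcD _ _)); exact: lerD.
Qed.

Lemma clN_ge0 U : 0 <= clN U.
Proof. by apply: sumr_ge0 => A _; exact: Nc_ge0. Qed.

Lemma clND (U V : Cl) : clN (U + V) <= clN U + clN V.
Proof.
rewrite /clN -big_split; apply: ler_sum => A _; rewrite ffunE; exact: NcD.
Qed.

Lemma clNN (U : Cl) : clN (- U) = clN U.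
Proof. by apply: eq_bigr => A _; rewrite ffunE NcN. Qed.

Lemma clNB (U V : Cl) : clN (U - V) <= clN U + clN V.
Proof. by apply: (le_trans (clND _ _)); rewrite clNN. Qed.

Lemma clN0 : clN 0 = 0.
Proof. by rewrite /clN big1 // => A _; rewrite ffunE Nc0. Qed.

Lemma clN_scale r (U : Cl) : clN (clscale r U) = `|r| * clN U.
Proof. rewrite /clN mulr_sumr; apply: eq_bigr => A _; by rewrite ffunE Nc_real. Qed.

Lemma clN_Re (U : Cl) A : `|complex.Re (U A)| <= clN U.
Proof.
apply: (le_trans (Nc_Re _)); rewrite /clN (bigD1 A) //= lerDl.
by apply: sumr_ge0 => ? _; exact: Nc_ge0.
Qed.
Lemma clN_Im (U : Cl) A : `|complex.Im (U A)| <= clN U.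
Proof.
apply: (le_trans (Nc_Im _)); rewrite /clN (bigD1 A) //= lerDl.
by apply: sumr_ge0 => ? _; exact: Nc_ge0.
Qed.

Lemma norm_etad (a : 'I_n) : `|etad R a| = 1.
Proof. by rewrite /etad; case: ifP; rewrite ?normrN normr1. Qed.

Lemma norm_clsign (A B : T) : `|clsign R A B| = 1.
Proof.
rewrite /clsign normrM normrX normrN normr1 expr1n mul1r.
elim/big_rec: _ => [|a x _ hx]; first by rewrite normr1.
by rewrite normrM norm_etad hx mulr1.
Qed.

Lemma clNM (U V : Cl) : clN (U * V) <= clN U * clN V.
Proof.
rewrite /clN.
apply: (le_trans (y := \sum_(C : T) \sum_(A : T) Nc (U A) * Nc (V (symdiff A C)))).
  apply: ler_sum => C _; rewrite -clmulM clmulE'.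
  apply: (le_trans (Nc_sum _ _)); apply: ler_sum => A _.
  rewrite -mulrA Nc_real norm_clsign mul1r; exact: NcM.
rewrite exchange_big mulr_suml /=; apply: ler_sum => A _.
rewrite -mulr_sumr (reindex_inj (can_inj (symdiffK A))) /=.
by under eq_bigr => B _ do rewrite symdiffK.
Qed.
End Norm.

Section Cvg.
Local Open Scope classical_set_scope.
Variables (R : realType) (p q : nat).
Local Notation n := (cldim p q).
Local Notation T := {set 'I_n}.
Local Notation Cl := (Cl R p q).

Definition Ncvg (f : R -> Cl) (L : Cl) :=
  (clN (f t - L)) @[t --> (0:R)^'] --> (0:R).

Lemma Ncvg_cst L : Ncvg (fun _ => L) L.
Proof.
rewrite /Ncvg; under eq_fun do rewrite subrr clN0. exact: cvg_cst.
Qed.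

Lemma Ncvg_D f g L M : Ncvg f L -> Ncvg g M -> Ncvg (fun t => f t + g t) (L + M).
Proof.
move=> hf hg; apply: (squeeze0 (g := fun t => clN (f t - L) + clN (g t - M))).
  near=> t; rewrite clN_ge0 /=; rewrite opprD addrACA; exact: clND.
by have := cvgD hf hg; rewrite addr0; apply.
Unshelve. all: end_near.
Qed.

Lemma Ncvg_N f L : Ncvg f L -> Ncvg (fun t => - f t) (- L).
Proof.
by move=> hf; rewrite /Ncvg; under eq_fun do rewrite -opprD clNN.
Qed.

Lemma Ncvg_B f g L M : Ncvg f L -> Ncvg g M -> Ncvg (fun t => f t - g t) (L - M).
Proof. by move=> hf hg; apply: Ncvg_D => //; exact: Ncvg_N. Qed.

Lemma Ncvg_M f g L M : Ncvg f L -> Ncvg g M -> Ncvg (fun t => f t * g t) (L * M).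
Proof.
move=> hf hg.
apply: (squeeze0 (g := fun t => clN (f t - L) * (clN (g t - M) + clN M) + clN L * clN (g t - M))).
  near=> t; rewrite clN_ge0 /=.
  have e1 : f t * g t - L * M = (f t - L) * g t + L * (g t - M).
    by rewrite mulrBl mulrBr addrA subrK.
  have e2 : (f t - L) * g t = (f t - L) * (g t - M) + (f t - L) * M.
    by rewrite -mulrDr subrK.
  rewrite e1 e2; apply: (le_trans (clND _ _)); apply: lerD; last exact: clNM.
  apply: (le_trans (clND _ _)); rewrite [X in _ <= X]mulrDr; apply: lerD; exact: clNM.
have := cvgD (cvgM hf (cvgD hg (cvg_cst (clN M)))) (cvgM (cvg_cst (clN L)) hg).
by rewrite mul0r mulr0 addr0; apply.
Unshelve. all: end_near.
Qed.

Lemma Ncvg_scale c f L : Ncvg f L -> Ncvg (fun t => clscale c (f t)) (clscale c L).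
Proof.
move=> hf; rewrite /Ncvg; under eq_fun do rewrite -clscaleB clN_scale.
by have := cvgM (cvg_cst `|c|) hf; rewrite mulr0; apply.
Qed.

Lemma ReB (a b : R[i]) : complex.Re (a - b) = complex.Re a - complex.Re b.
Proof. by case: a => ? ?; case: b. Qed.
Lemma ImB (a b : R[i]) : complex.Im (a - b) = complex.Im a - complex.Im b.
Proof. by case: a => ? ?; case: b. Qed.

Lemma Ncvg_Re (f : R -> Cl) (L : Cl) A : Ncvg f L -> complex.Re (f t A) @[t --> (0:R)^'] --> complex.Re (L A).
Proof.
move=> hf; apply: diff_cvg0; apply: (squeeze0 (g := fun t => clN (f t - L))) => //.
near=> t; rewrite normr_ge0 /= -ReB; have := clN_Re (f t - L) A; by rewrite !ffunE.
Unshelve. all: end_near.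
Qed.
Lemma Ncvg_Im (f : R -> Cl) (L : Cl) A : Ncvg f L -> complex.Im (f t A) @[t --> (0:R)^'] --> complex.Im (L A).
Proof.
move=> hf; apply: diff_cvg0; apply: (squeeze0 (g := fun t => clN (f t - L))) => //.
near=> t; rewrite normr_ge0 /= -ImB; have := clN_Im (f t - L) A; by rewrite !ffunE.
Unshelve. all: end_near.
Qed.

Lemma norm_cvg0 (g : R -> R) l : g t @[t --> (0:R)^'] --> l ->
  `|g t - l| @[t --> (0:R)^'] --> (0:R).
Proof.
move=> h; have := cvg_norm (proj2 (subr_cvg0 _ _) h); by rewrite normr0; apply.
Qed.

Lemma Ncvg_coef (f : R -> Cl) (L : Cl) :
  (forall A, complex.Re (f t A) @[t --> (0:R)^'] --> complex.Re (L A)) ->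
  (forall A, complex.Im (f t A) @[t --> (0:R)^'] --> complex.Im (L A)) ->
  Ncvg f L.
Proof.
move=> hR hI; rewrite /Ncvg /clN.
under eq_fun do under eq_bigr do rewrite !ffunE /Nc ReB ImB.
apply: sum_cvg0 => A; have := cvgD (norm_cvg0 (hR A)) (norm_cvg0 (hI A)).
by rewrite addr0; apply.
Qed.
End Cvg.

Section Der.
Local Open Scope classical_set_scope.
Variables (R : realType) (p q : nat).
Local Notation n := (cldim p q).
Local Notation T := {set 'I_n}.
Local Notation Cl := (Cl R p q).
Local Notation V := 'rV[R]_n.

Definition DQ (F : V -> Cl) (x v : V) (t : R) : Cl :=
  clscale t^-1 (F (t *: v + x) - F x).

Lemma Re_realM (r : R) (z : R[i]) : complex.Re ((r%:C)%C * z) = r * complex.Re z.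
Proof. by case: z => a b /=; rewrite mul0r subr0. Qed.
Lemma Im_realM (r : R) (z : R[i]) : complex.Im ((r%:C)%C * z) = r * complex.Im z.
Proof. by case: z => a b /=; rewrite mul0r addr0. Qed.

Lemma quotRe (F : V -> Cl) x v A :
  (fun h : R => h^-1 *: (((fun y => complex.Re (F y A)) \o shift x) (h *: v)
       - complex.Re (F x A))) = (fun t => complex.Re (DQ F x v t A)).
Proof.
apply/funext => t; rewrite /DQ !ffunE Re_realM ReB /=.
by [].
Qed.
Lemma quotIm (F : V -> Cl) x v A :
  (fun h : R => h^-1 *: (((fun y => complex.Im (F y A)) \o shift x) (h *: v)
       - complex.Im (F x A))) = (fun t => complex.Im (DQ F x v t A)).
Proof.
apply/funext => t; rewrite /DQ !ffunE Im_realM ImB /=.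
by [].
Qed.

Lemma clpartial_lim (F : V -> Cl) x mu (L : Cl) :
  Ncvg (DQ F x (@coordvec R p q mu)) L -> clpartial mu F x = L.
Proof.
move=> h; apply/ffunP => A; rewrite ffunE /rpartial /derive.
rewrite quotRe quotIm (cvg_lim (@Rhausdorff R) (Ncvg_Re (A := A) h)).
rewrite (cvg_lim (@Rhausdorff R) (Ncvg_Im (A := A) h)).
by case: (L A).
Qed.

Lemma smooth_Ncvg (F : V -> Cl) x mu :
  clsmooth F -> Ncvg (DQ F x (@coordvec R p q mu)) (clpartial mu F x).
Proof.
move=> hF; apply: Ncvg_coef => A; rewrite ffunE /=.
- have := (((hF A).1 [::]).1 x mu); rewrite /derivable /= quotRe.
  by rewrite /rpartial /derive quotRe.
- have := (((hF A).2 [::]).1 x mu); rewrite /derivable /= quotIm.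
  by rewrite /rpartial /derive quotIm.
Qed.

Lemma DQ_cont (F : V -> Cl) x v P :
  Ncvg (DQ F x v) P -> Ncvg (fun t => F (t *: v + x)) (F x).
Proof.
move=> h.
apply: (squeeze0 (g := fun t => `|t| * (clN (DQ F x v t - P) + clN P))).
  near=> t; rewrite clN_ge0 /=.
  have tn0 : t != 0 by near: t; exact: nbhs_dnbhs_neq.
  have -> : F (t *: v + x) - F x = clscale t (DQ F x v t).
    by rewrite /DQ clscaleM mulfV // clscale1.
  rewrite clN_scale; apply: ler_wpM2l; first exact: normr_ge0.
  by rewrite -{1}(subrK P (DQ F x v t)); exact: clND.
have := cvgM (@tcvg0n R) (cvgD h (cvg_cst (clN P))).
by rewrite mul0r; apply.
Unshelve. all: end_near.
Qed.

Lemma DQ_mul (F G : V -> Cl) x v t :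
  DQ (fun y => F y * G y) x v t = DQ F x v t * G (t *: v + x) + F x * DQ G x v t.
Proof.
rewrite /DQ clscale_mull clscale_mulr -clscaleD; congr clscale.
by rewrite mulrBl mulrBr addrA subrK.
Qed.

Lemma Ncvg_DQ_mul (F G : V -> Cl) x v P Q :
  Ncvg (DQ F x v) P -> Ncvg (DQ G x v) Q ->
  Ncvg (DQ (fun y => F y * G y) x v) (P * G x + F x * Q).
Proof.
move=> hF hG; rewrite /Ncvg; under eq_fun do rewrite DQ_mul.
apply: Ncvg_D; first exact: Ncvg_M hF (DQ_cont hG).
exact: Ncvg_M (Ncvg_cst _) hG.
Qed.

Lemma clscale_scaleN r (U : Cl) : - clscale r U = clscale r (- U).
Proof. by apply/ffunP => A; rewrite !ffunE mulrN. Qed.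

Lemma DQ_inv (S Si : V -> Cl) x v t :
  (forall y, S y * Si y = 1 /\ Si y * S y = 1) ->
  DQ Si x v t = - (Si (t *: v + x) * DQ S x v t * Si x).
Proof.
move=> hinv; rewrite /DQ clscale_mulr clscale_mull clscale_scaleN; congr clscale.
by rewrite mulrBr mulrBl (hinv _).2 mul1r -mulrA (hinv x).1 mulr1 opprB.
Qed.

Lemma inv_diff (S Si : V -> Cl) y x :
  (forall y, S y * Si y = 1 /\ Si y * S y = 1) ->
  Si y - Si x = - (Si y * (S y - S x) * Si x).
Proof.
move=> hinv.
by rewrite mulrBr mulrBl (hinv _).2 mul1r -mulrA (hinv x).1 mulr1 opprB.
Qed.

Lemma Si_cont (S Si : V -> Cl) x v P :
  (forall y, S y * Si y = 1 /\ Si y * S y = 1) ->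
  Ncvg (DQ S x v) P -> Ncvg (fun t => Si (t *: v + x)) (Si x).
Proof.
move=> hinv hP; have hS := DQ_cont hP.
set a := clN (Si x).
have hd : (clN (S (t *: v + x) - S x) * a) @[t --> (0:R)^'] --> (0:R).
  by have := cvgM hS (cvg_cst a); rewrite mul0r; apply.
have h12 : \forall t \near (0:R)^', clN (S (t *: v + x) - S x) * a < 1 / 2.
  by apply: (cvgr_lt 0 hd); rewrite divr_gt0.

apply: (squeeze0 (g := fun t => 2 * (a * clN (S (t *: v + x) - S x) * a))).
  near=> t; rewrite clN_ge0 /=.
  have hlt : clN (S (t *: v + x) - S x) * a < 1 / 2.
    by near: t; exact: h12.
  set y := t *: v + x.
  set e := clN (Si y - Si x); set d := clN (S y - S x).
  have e1 : Si y - Si x = - ((Si y - Si x) * (S y - S x) * Si x)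
             - Si x * (S y - S x) * Si x.
    by rewrite {1}(inv_diff y x hinv) -{1}(subrK (Si x) (Si y)) !mulrDl opprD.
  have hb : e <= e * d * a + a * d * a.
    rewrite {1}/e e1; apply: (le_trans (clND _ _)); rewrite !clNN.
    apply: lerD.
      apply: (le_trans (clNM _ _)); apply: ler_wpM2r; first exact: clN_ge0.
      exact: clNM.
    apply: (le_trans (clNM _ _)); apply: ler_wpM2r; first exact: clN_ge0.
    exact: clNM.
  have he : 0 <= e by exact: clN_ge0.
  have hed : e * d * a <= e * (1/2).
    by rewrite -mulrA; apply: ler_wpM2l => //; exact: ltW.
  lra.
have := cvgM (cvg_cst (2:R)) (cvgM (cvgM (cvg_cst a) hS) (cvg_cst a)).
by rewrite mulr0 mul0r mulr0; apply.
Unshelve. all: end_near.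
Qed.

Lemma Ncvg_DQ_inv (S Si : V -> Cl) x v P :
  (forall y, S y * Si y = 1 /\ Si y * S y = 1) ->
  Ncvg (DQ S x v) P -> Ncvg (DQ Si x v) (- (Si x * P * Si x)).
Proof.
move=> hinv hP; rewrite /Ncvg; under eq_fun do rewrite (DQ_inv _ _ _ hinv).
apply: Ncvg_N; apply: Ncvg_M (Ncvg_cst _).
exact: Ncvg_M (Si_cont hinv hP) hP.
Qed.
End Der.

Lemma zid (V : zmodType) (A B C D : V) : -A + (B - C + D) - (B - A - (C - D)) = 0.
Proof.
apply/eqP; rewrite subr_eq0; apply/eqP.
rewrite opprB addrA !addrA [-A + B]addrC addrAC.
by [].
Qed.
Lemma key (K : pzRingType) (i s s' c g : K) : s * i = 1 ->
  - (i * s' * i) * (g * s) + i * ((c * g - g * c) * s + g * s') -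
  ((i * (c * s) - i * s') * (i * (g * s)) - (i * (g * s)) * (i * (c * s) - i * s')) = 0.
Proof.
move=> hs.
have sK : forall X, X * s * i = X by move=> X; rewrite -mulrA hs mulr1.
rewrite !(mulrBl, mulrBr, mulrDl, mulrDr, mulNr, mulrN) !mulrA !sK.
exact: zid.
Qed.

Lemma cllowerE (R : realType) (p q : nat) (h : 'I_(cldim p q) -> 'rV[R]_(cldim p q) -> Cl R p q) rho x :
  cllower h rho x = clscale (etad R rho) (h rho x).
Proof.
rewrite /cllower (bigD1 rho) //= big1 ?addr0.
  by rewrite /cleta eqxx.
by move=> mu /negPf hmu; rewrite /cleta eq_sym hmu clscale0.
Qed.

Theorem theorem6 (R : realType) (p q : nat)
  (h : 'I_(cldim p q) -> 'rV[R]_(cldim p q) -> Cl R p q)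
  (C : 'I_(cldim p q) -> 'rV[R]_(cldim p q) -> Cl R p q)
  (S Sinv : 'rV[R]_(cldim p q) -> Cl R p q) :
  (forall mu, clsmooth (h mu)) ->
  (forall mu x, in_ClS (h mu x)) ->
  clifford_field_vector h ->
  (forall mu, clsmooth (C mu)) ->
  (forall mu x, in_ClS (C mu x)) ->
  (forall mu rho x,
     clpartial mu (cllower h rho) x - clcomm (C mu x) (cllower h rho x) = 0) ->
  clsmooth S ->
  (forall x, clmul (S x) (Sinv x) = clone R p q /\ clmul (Sinv x) (S x) = clone R p q) ->
  (forall mu x, in_ClS (clmul (Sinv x) (clpartial mu S x))) ->
  let hacute := fun rho x => clmul (Sinv x) (clmul (cllower h rho x) (S x)) in
  let Cacute := fun mu x =>
      clmul (Sinv x) (clmul (C mu x) (S x)) - clmul (Sinv x) (clpartial mu S x) in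
  (forall rho x, in_ClS (hacute rho x)) /\
  (forall mu x, in_ClS (Cacute mu x)) /\
  (forall mu rho x,
     clpartial mu (hacute rho) x - clcomm (Cacute mu x) (hacute rho x) = 0).
Proof.
move=> hsm hS0 _ _ hC0 heq hSsm hinv hdS0 hacute Cacute.
have hinv' : forall y, S y * Sinv y = 1 /\ Sinv y * S y = 1 by exact: hinv.
split; [|split].
- move=> rho x; rewrite /hacute !clmulM; apply: in_ClS_conj (hinv' x).1 _.
  by rewrite cllowerE; apply: in_ClS_scale.
- move=> mu x; rewrite /Cacute; apply: in_ClSB; last exact: hdS0.
  rewrite !clmulM; exact: in_ClS_conj (hinv' x).1 (hC0 mu x).
move=> mu rho x.
set v := coordvec R mu.
have hSd := smooth_Ncvg x mu hSsm.
have hSi := Ncvg_DQ_inv hinv' hSd.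
have hl0 : Ncvg (DQ (cllower h rho) x v) (clscale (etad R rho) (clpartial mu (h rho) x)).
  have -> : DQ (cllower h rho) x v = fun t => clscale (etad R rho) (DQ (h rho) x v t).
    apply/funext => t; rewrite /DQ !cllowerE -clscaleB !clscaleM.
    by rewrite mulrC.
  exact: Ncvg_scale (smooth_Ncvg x mu (hsm rho)).
have hl := hl0; rewrite -(clpartial_lim hl0) in hl.
have hprod := Ncvg_DQ_mul hSi (Ncvg_DQ_mul hl hSd).
have -> : clpartial mu (hacute rho) x = _ := clpartial_lim hprod.
have hg' := heq mu rho x; move/eqP: hg'; rewrite subr_eq0 => /eqP ->.
rewrite /Cacute /clcomm /hacute !clmulM.
exact: key (hinv' x).1.
Qed.
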